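(* Let $\sigma:\mathbb{R}\to\mathbb{R}$ be an increasing odd homeomorphism. The group $\Gamma_2(\sigma)$ generated by $h_\sigma^2$ and $v_\sigma^2$ is a free group.
   Context: $h_\sigma(x,y)=(x+\sigma^{-1}(y),y)$ and $v_\sigma(x,y)=(x,\sigma(x)+y)$ are bijections of $\mathbb{R}^2$; the group operation is composition. *)

(* Defs.v *)
From Stdlib Require Import Reals Lra ZArith List.
Open Scope R_scope.

Definition pt := (R * R)%type.

Definition h_map (sinv : R -> R) (p : pt) : pt := (fst p + sinv (snd p), snd p).
Definition h_inv (sinv : R -> R) (p : pt) : pt := (fst p - sinv (snd p), snd p).
Definition v_map (s : R -> R) (p : pt) : pt := (fst p, s (fst p) + snd p).
Definition v_inv (s : R -> R) (p : pt) : pt := (fst p, snd p - s (fst p)).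

Fixpoint iter_map (n : nat) (f : pt -> pt) (p : pt) : pt :=
  match n with O => p | S k => f (iter_map k f p) end.

Definition zpow (f g : pt -> pt) (n : Z) : pt -> pt :=
  match n with
  | Z0 => fun p => p
  | Zpos k => iter_map (Pos.to_nat k) f
  | Zneg k => iter_map (Pos.to_nat k) g
  end.

Definition letter_map (s sinv : R -> R) (l : bool * Z) : pt -> pt :=
  let (b, n) := l in
  if b then zpow (h_map sinv) (h_inv sinv) (2 * n)
  else zpow (v_map s) (v_inv s) (2 * n).

(* The element of the group represented by a word (composition, the first
   letter is the leftmost factor). *)
Fixpoint word_map (s sinv : R -> R) (w : list (bool * Z)) : pt -> pt :=
  match w with
  | nil => fun p => p
  | l :: w' => fun p => letter_map s sinv l (word_map s sinv w' p)
  end.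

Fixpoint reduced_word (w : list (bool * Z)) : Prop :=
  match w with
  | nil => True
  | (b, n) :: w' =>
      n <> 0%Z /\
      match w' with
      | nil => True
      | (b', _) :: _ => b <> b'
      end /\ reduced_word w'
  end.

Definition freely_generated_by_h2_v2 (s sinv : R -> R) : Prop :=
  forall w : list (bool * Z), w <> nil -> reduced_word w ->
    word_map s sinv w <> (fun p => p).

(* Main.v *)
Require Import Defs.
From Stdlib Require Import Reals ZArith List Lra Lia.
Open Scope R_scope.

Lemma iter_h (sinv : R -> R) (k : nat) (p : pt) :
  iter_map k (h_map sinv) p = (fst p + INR k * sinv (snd p), snd p).
Proof.
  induction k as [|k IH]; cbn [iter_map fst snd].
  - destruct p; simpl; f_equal; ring.
  - rewrite IH; unfold h_map; cbn [fst snd]. rewrite S_INR. f_equal; ring.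
Qed.

Lemma iter_hi (sinv : R -> R) (k : nat) (p : pt) :
  iter_map k (h_inv sinv) p = (fst p - INR k * sinv (snd p), snd p).
Proof.
  induction k as [|k IH]; cbn [iter_map fst snd].
  - destruct p; simpl; f_equal; ring.
  - rewrite IH; unfold h_inv; cbn [fst snd]. rewrite S_INR. f_equal; ring.
Qed.

Lemma iter_v (s : R -> R) (k : nat) (p : pt) :
  iter_map k (v_map s) p = (fst p, snd p + INR k * s (fst p)).
Proof.
  induction k as [|k IH]; cbn [iter_map fst snd].
  - destruct p; simpl; f_equal; ring.
  - rewrite IH; unfold v_map; cbn [fst snd]. rewrite S_INR. f_equal; ring.
Qed.

Lemma iter_vi (s : R -> R) (k : nat) (p : pt) :
  iter_map k (v_inv s) p = (fst p, snd p - INR k * s (fst p)).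
Proof.
  induction k as [|k IH]; cbn [iter_map fst snd].
  - destruct p; simpl; f_equal; ring.
  - rewrite IH; unfold v_inv; cbn [fst snd]. rewrite S_INR. f_equal; ring.
Qed.

Lemma INR_pos (k : positive) : INR (Pos.to_nat k) = IZR (Zpos k).
Proof. rewrite INR_IZR_INZ, positive_nat_Z. reflexivity. Qed.

Lemma zpow_h (sinv : R -> R) (m : Z) (p : pt) :
  zpow (h_map sinv) (h_inv sinv) m p = (fst p + IZR m * sinv (snd p), snd p).
Proof.
  destruct m as [|k|k]; simpl.
  - destruct p; simpl; f_equal; ring.
  - rewrite iter_h, INR_pos. reflexivity.
  - rewrite iter_hi, INR_pos. f_equal. rewrite <- Pos2Z.opp_pos, opp_IZR. ring.
Qed.

Lemma zpow_v (s : R -> R) (m : Z) (p : pt) :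
  zpow (v_map s) (v_inv s) m p = (fst p, snd p + IZR m * s (fst p)).
Proof.
  destruct m as [|k|k]; simpl.
  - destruct p; simpl; f_equal; ring.
  - rewrite iter_v, INR_pos. reflexivity.
  - rewrite iter_vi, INR_pos. f_equal. rewrite <- Pos2Z.opp_pos, opp_IZR. ring.
Qed.

Lemma abs2 (n : Z) : n <> 0%Z -> 2 <= Rabs (IZR (2 * n)).
Proof.
  intro Hn. rewrite mult_IZR, Rabs_mult, Rabs_right by lra.
  rewrite Rabs_Zabs. assert (1 <= IZR (Z.abs n)) by (apply IZR_le; lia). lra.
Qed.

Lemma push (a c t : R) : Rabs a < Rabs t -> 2 <= Rabs c -> Rabs t < Rabs (a + c * t).
Proof.
  intros H1 H2.
  assert (H3 : Rabs (c * t) <= Rabs (a + c * t) + Rabs a).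
  { replace (c * t) with ((a + c * t) + - a) at 1 by ring.
    eapply Rle_trans; [apply Rabs_triang|]. rewrite Rabs_Ropp. lra. }
  rewrite Rabs_mult in H3.
  assert (0 <= Rabs t) by apply Rabs_pos.
  nra.
Qed.

Lemma last_nn {A} (a : A) l d d' : last (a :: l) d = last (a :: l) d'.
Proof. revert a; induction l as [|x l IH]; intros a; [reflexivity|]. simpl. simpl in IH. apply IH. Qed.

Definition inP (sinv : R -> R) (b : bool) (p : pt) : Prop :=
  if b then Rabs (sinv (snd p)) < Rabs (fst p)
  else Rabs (fst p) < Rabs (sinv (snd p)).

Definition Mz (sinv : R -> R) (p : pt) : R := Rmax (Rabs (fst p)) (Rabs (sinv (snd p))).

Lemma mono_rev (sigma : R -> R)
  (Hincr : forall x y : R, x < y -> sigma x < sigma y) a b :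
  sigma a < sigma b -> a < b.
Proof.
  intro H. destruct (Rlt_le_dec a b) as [|Hba]; auto.
  destruct Hba as [Hba|Hba].
  - apply Hincr in Hba. lra.
  - subst. lra.
Qed.

Lemma abs_sigma (sigma : R -> R)
  (Hincr : forall x y : R, x < y -> sigma x < sigma y)
  (Hodd : forall x : R, sigma (- x) = - sigma x) x :
  Rabs (sigma x) = sigma (Rabs x).
Proof.
  assert (H0 : sigma 0 = 0) by (pose proof (Hodd 0); rewrite Ropp_0 in H; lra).
  destruct (Rtotal_order x 0) as [H|[H|H]].
  - rewrite (Rabs_left x H). pose proof (Hincr _ _ H). rewrite Rabs_left by lra.
    rewrite Hodd. reflexivity.
  - subst. rewrite Rabs_R0, H0, Rabs_R0. reflexivity.
  - rewrite (Rabs_right x) by lra. pose proof (Hincr _ _ H). rewrite Rabs_right by lra.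
    reflexivity.
Qed.

Theorem proposition1 (sigma sigma_inv : R -> R)
  (Hcont : continuity sigma)
  (Hincr : forall x y : R, x < y -> sigma x < sigma y)
  (Hodd : forall x : R, sigma (- x) = - sigma x)
  (Hinv1 : forall x : R, sigma_inv (sigma x) = x)
  (Hinv2 : forall y : R, sigma (sigma_inv y) = y)
  (Hcont_inv : continuity sigma_inv) :
  freely_generated_by_h2_v2 sigma sigma_inv.
Proof.
  assert (H0 : sigma 0 = 0) by (pose proof (Hodd 0); rewrite Ropp_0 in H; lra).
  assert (AS := abs_sigma sigma Hincr Hodd).
  assert (MR := mono_rev sigma Hincr).
  assert (AY : forall y, Rabs y = sigma (Rabs (sigma_inv y))).
  { intro y. rewrite <- AS, Hinv2. reflexivity. }
  assert (K1 : forall x y, Rabs (sigma_inv y) < Rabs x <-> Rabs y < Rabs (sigma x)).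
  { intros x y. rewrite (AY y), AS. split; [apply Hincr|apply MR]. }
  assert (K2 : forall x y, Rabs x < Rabs (sigma_inv y) <-> Rabs (sigma x) < Rabs y).
  { intros x y. rewrite (AY y), AS. split; [apply Hincr|apply MR]. }
  assert (L : forall b n p, n <> 0%Z -> inP sigma_inv (negb b) p ->
             inP sigma_inv b (letter_map sigma sigma_inv (b, n) p) /\
             Mz sigma_inv p < Mz sigma_inv (letter_map sigma sigma_inv (b, n) p)).
  { intros b n [x y] Hn HP. pose proof (abs2 n Hn) as Hc. destruct b; unfold letter_map, inP, negb in *; cbn [fst snd] in *.
    - rewrite zpow_h; unfold Mz; cbn [fst snd].
      pose proof (push x (IZR (2 * n)) (sigma_inv y) HP Hc) as Hp.
      split; [exact Hp|].
      rewrite (Rmax_right (Rabs x)) by lra. rewrite Rmax_left by lra. exact Hp.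
    - rewrite zpow_v; unfold Mz; cbn [fst snd].
      apply K1 in HP.
      pose proof (push y (IZR (2 * n)) (sigma x) HP Hc) as Hp.
      apply K2 in Hp. apply K1 in HP.
      split; [exact Hp|].
      rewrite (Rmax_left (Rabs x)) by lra. rewrite Rmax_right by lra. exact Hp. }
  assert (W : forall w l, reduced_word (l :: w) -> forall p,
             inP sigma_inv (negb (fst (last (l :: w) l))) p ->
             inP sigma_inv (fst l) (word_map sigma sigma_inv (l :: w) p) /\
             Mz sigma_inv p < Mz sigma_inv (word_map sigma sigma_inv (l :: w) p)).
  { induction w as [|l' w IH]; intros [b n] Hr p Hp.
    - simpl in Hr |- *. destruct Hr as [Hn _].
      apply (L b n p Hn Hp).
    - destruct l' as [b' n']. simpl in Hr. destruct Hr as [Hn [Hbb Hr']].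
      assert (Hlast : last ((b, n) :: (b', n') :: w) (b, n) = last ((b', n') :: w) (b', n')).
      { change (last ((b', n') :: w) (b, n) = last ((b', n') :: w) (b', n')).
        apply last_nn. }
      rewrite Hlast in Hp.
      destruct (IH (b', n') Hr' p Hp) as [HP1 HM1].
      change (word_map sigma sigma_inv ((b, n) :: (b', n') :: w) p) with
        (letter_map sigma sigma_inv (b, n) (word_map sigma sigma_inv ((b', n') :: w) p)).
      assert (b' = negb b) by (destruct b, b'; simpl; congruence).
      subst b'. cbn [fst] in HP1.
      destruct (L b n _ Hn HP1) as [HA HB]. split; [exact HA| lra]. }
  intros w Hne Hr Heq. destruct w as [|l w]; [congruence|].
  set (bb := fst (last (l :: w) l)).
  set (p := if negb bb then (1, 0) else (0, 1)).
  assert (Hp : inP sigma_inv (negb bb) p).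
  { unfold p. destruct (negb bb); simpl.
    - assert (Si0 : sigma_inv 0 = 0) by (pose proof (Hinv1 0) as E; rewrite H0 in E; exact E). rewrite Si0, Rabs_R0, Rabs_R1. lra.
    - apply K2. rewrite H0, Rabs_R0, Rabs_R1. lra. }
  destruct (W w l Hr p Hp) as [_ HM].
  rewrite Heq in HM. lra.
Qed.
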